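(* Let $a=\{a_1,\dots,a_m\}$ be a set of positive integers and $n\ge 0$. There exist a function $P_{n,a}:\mathbb{Z}_{\ge0}\to\mathbb{Q}$ (in fact a polynomial) and an integer $N$ such that for every $s\ge 1$ and all integers $k_1,\dots,k_s\ge N$, the number of $n$-element independent sets of the disjoint union $F(a,k_1)+F(a,k_2)+\cdots+F(a,k_s)$ equals $P_{n,a}(k_1+\cdots+k_s)$. In other words, this number depends only on $a$, $n$ and $\sum_ik_i$.
   Context: For a set $a=\{a_1,\dots,a_m\}$ of positive integers and a positive integer $k$, $F(a,k)$ is the simple graph with vertex set $\mathbb{Z}/k\mathbb{Z}$ in which distinct vertices $i,j$ are adjacent if and only if $i-j\equiv a_r\pmod k$ or $j-i\equiv a_r\pmod k$ for some $1\le r\le m$. $G_1+\cdots+G_s$ denotes the disjoint union of graphs. An independent set is a set of vertices no two of which are adjacent. *)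

(* Defs.v *)
From HB Require Import structures.
From mathcomp Require Import all_boot all_order all_algebra.
Set Implicit Arguments. Unset Strict Implicit. Unset Printing Implicit Defensive.

(* Adjacency in F(a,k): vertices x, y in {0,..,k-1} representing Z/kZ;
   distinct x,y adjacent iff x - y = a_r or y - x = a_r (mod k) for some r. *)
Definition Fadj (a : seq nat) (k : nat) (x y : nat) : bool :=
  (x != y) &&
  has (fun r => ((x + k - y) %% k == r %% k) || ((y + k - x) %% k == r %% k)) a.

(* Vertex set of F(a,k_1)+...+F(a,k_s), where ks = [:: k_1; ...; k_s]:
   a vertex is a component index i together with an element of Z/k_i Z. *)
Definition vert (ks : seq nat) : finType :=
  {i : 'I_(size ks) & 'I_(nth 0 ks i)}.

Definition union_adj (a : seq nat) (ks : seq nat) (u v : vert ks) : bool :=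
  (tag u == tag v) &&
  Fadj a (nth 0 ks (tag u)) (nat_of_ord (tagged u)) (nat_of_ord (tagged v)).

Definition independent (a ks : seq nat) (S : {set vert ks}) : bool :=
  [forall u in S, forall v in S, ~~ union_adj a u v].

Definition num_indep (a ks : seq nat) (n : nat) : nat :=
  #|[set S : {set vert ks} | independent a S & #|S| == n]|.

(* Main.v *)
Require Import Defs.
From HB Require Import structures.
From mathcomp Require Import all_boot all_order all_algebra zify ring.
Import GRing.Theory Num.Theory.
Set Implicit Arguments. Unset Strict Implicit. Unset Printing Implicit Defensive.
Local Open Scope ring_scope.

Lemma natmod_dvd (k m r : nat) : (m %% k == r %% k)%N = (k%:Z %| m%:Z - r%:Z)%Z.
Proof. by rewrite -eqz_nat -!modz_nat eqz_mod_dvd. Qed.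

Lemma dvdz_small (k : nat) (z : int) : (`|z| < k)%N -> (k%:Z %| z)%Z = (z == 0).
Proof.
move=> h; apply/idP/eqP => [|->]; last exact: dvdz0.
rewrite dvdzE /= => /dvdn_leq; case: (absz z =P 0%N) => [/eqP|nz].
  by rewrite absz_eq0 => /eqP.
by move=> H; have := H ltac:(lia); lia.
Qed.

Lemma dvdz_addk (k : nat) (z : int) : (k%:Z %| z + k%:Z)%Z = (k%:Z %| z)%Z.
Proof. exact: (rpredDr _ (dvdzz _)). Qed.
Lemma dvdzN (k : nat) (z : int) : (k%:Z %| - z)%Z = (k%:Z %| z)%Z.
Proof. exact: rpredN. Qed.

Definition Rz (a : seq nat) (k : nat) (z : int) : bool :=
  (k%:Z %| z)%Z || has (fun r : nat => (k%:Z %| z - r%:Z)%Z || (k%:Z %| z + r%:Z)%Z) a.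

Lemma Fadj_char a k x y : (x < k)%N -> (y < k)%N ->
  (x == y) || Fadj a k x y = Rz a k (y%:Z - x%:Z).
Proof.
move=> hx hy; rewrite /Fadj /Rz.
have -> : (k%:Z %| y%:Z - x%:Z)%Z = (x == y).
  by rewrite -natmod_dvd !modn_small // eq_sym.
case: eqP => //= _; apply: eq_has => r /=.
rewrite !natmod_dvd orbC.
have -> : ((x + k - y)%N%:Z - r%:Z) = - (y%:Z - x%:Z + r%:Z) + k%:Z by lia.
have -> : ((y + k - x)%N%:Z - r%:Z) = (y%:Z - x%:Z - r%:Z) + k%:Z by lia.
by rewrite !dvdz_addk dvdzN.
Qed.

Definition Rint (a : seq nat) (z : int) : bool :=
  (z == 0) || has (fun r : nat => (z == r%:Z) || (z == - r%:Z)) a.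

Lemma dvdz_addX (k : nat) (X Y : int) : (k%:Z %| X)%Z -> (k%:Z %| Y + X)%Z = (k%:Z %| Y)%Z.
Proof. exact: rpredDr. Qed.

Section Vert.
Variables (a ks : seq nat).
Local Notation V := (vert ks).
Definition kof (u : V) : nat := nth 0%N ks (tag u).
Definition pos (u : V) : int := (nat_of_ord (tagged u))%:Z.
Definition Rv (u v : V) : bool := (u == v) || union_adj a u v.

Lemma Rv_char u v : Rv u v = (tag u == tag v) && Rz a (kof u) (pos v - pos u).
Proof.
case: u => c x; case: v => c' y; rewrite /Rv /union_adj /kof /pos /=.
case: (c =P c') => [e | ne].
  subst c'; rewrite /= eq_Tagged /= -Fadj_char ?ltn_ord //.
rewrite orbC /=; apply/eqP => h; apply: ne; exact: (congr1 tag h).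
Qed.

Definition Lift (u v : V) (d : int) : bool :=
  (tag u == tag v) && ((kof u)%:Z %| pos v - pos u - d)%Z.

Lemma Lift0 u : Lift u u 0.
Proof. by rewrite /Lift eqxx subrr subr0 dvdz0. Qed.

Lemma Lift_kof u v d : Lift u v d -> kof v = kof u.
Proof. by case/andP => /eqP e _; rewrite /kof e. Qed.

Lemma Lift_trans u v w d d' : Lift u v d -> Lift v w d' -> Lift u w (d + d').
Proof.
move=> h1 h2; have e := Lift_kof h1.
move: h1 h2; rewrite /Lift e => /andP[/eqP -> h1] /andP[/eqP -> h2].
rewrite eqxx /=.
have -> : pos w - pos u - (d + d') = (pos w - pos v - d') + (pos v - pos u - d) by ring.
exact: rpredD.
Qed.

Lemma Lift_sym u v d : Lift u v d -> Lift v u (- d).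
Proof.
move=> h; have e := Lift_kof h; move: h; rewrite /Lift e => /andP[/eqP -> h].
rewrite eqxx /=.
have -> : pos u - pos v - - d = - (pos v - pos u - d) by ring.
by rewrite dvdzN.
Qed.

Lemma Lift_uniq B u v d d' : (`|d| <= B)%N -> (`|d'| <= B)%N -> (B.*2 < kof u)%N ->
  Lift u v d -> Lift u v d' -> d = d'.
Proof.
move=> hd hd' hk /andP[_ h1] /andP[_ h2].
have : ((kof u)%:Z %| d' - d)%Z.
  have -> : d' - d = (pos v - pos u - d) - (pos v - pos u - d') by ring.
  exact: rpredB.
rewrite dvdz_small; first by move/eqP => h; apply/eqP; rewrite eq_sym -subr_eq0 h.
lia.
Qed.

Definition shift (u : V) (d : int) : V :=
  Tagged (fun i : 'I_(size ks) => 'I_(nth 0%N ks i))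
    (insubd (tagged u) (absz ((pos u + d) %% (kof u)%:Z)%Z)).

Lemma kof_pos (u : V) : (0 < kof u)%N.
Proof. exact: leq_ltn_trans (ltn_ord (tagged u)). Qed.

Lemma pos_bound (u : V) : (0 <= pos u) && (pos u < (kof u)%:Z).
Proof. rewrite /pos /kof; have := ltn_ord (tagged u); lia. Qed.

Lemma pos_shift u d : pos (shift u d) = ((pos u + d) %% (kof u)%:Z)%Z.
Proof.
rewrite {1}/pos /shift /= val_insubd.
have kp := kof_pos u.
have k0 : (kof u)%:Z != 0 by rewrite eqz_nat -lt0n.
have h0 := modz_ge0 (pos u + d) k0.
have h1 := @ltz_pmod (pos u + d) (kof u)%:Z ltac:(rewrite ltz_nat //).
rewrite ifT; first by rewrite gez0_abs.
by rewrite -ltz_nat gez0_abs.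
Qed.

Lemma Lift_shift u d : Lift u (shift u d) d.
Proof.
rewrite /Lift eqxx /= pos_shift.
have e := divz_eq (pos u + d) (kof u)%:Z.
move: e; set q := ((pos u + d) %/ _)%Z; set r := ((pos u + d) %% _)%Z => e.
have -> : r - pos u - d = - (q * (kof u)%:Z).
  have -> : r - pos u - d = r - (pos u + d) by ring.
  rewrite e; ring.
by rewrite dvdzN dvdz_mull // dvdzz.
Qed.

Lemma tag_pos_inj (v w : V) : tag v = tag w -> pos v = pos w -> v = w.
Proof.
case: v => c x; case: w => c' y /= e; subst c' => /= h.
congr existT; apply: val_inj; by case: h.
Qed.

Lemma Lift_eq_shift u v d : Lift u v d -> v = shift u d.
Proof.
move=> h; have ek := Lift_kof h; move: h; rewrite /Lift => /andP[/eqP t /dvdzP[q hq]].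
apply: tag_pos_inj => //; rewrite pos_shift.
have -> : pos u + d = (- q) * (kof u)%:Z + pos v.
  have -> : pos u + d = pos v - (pos v - pos u - d) by ring.
  rewrite hq; ring.
rewrite modzMDl modz_small //.
by have := pos_bound v; rewrite ek.
Qed.
Variable M : nat.
Hypothesis hM : all (fun r => r <= M)%N a.

Lemma Rv_Lift u v : Rv u v -> exists2 d : int, (`|d| <= M)%N & Lift u v d.
Proof.
rewrite Rv_char /Lift => /andP[-> /=]; rewrite /Rz => /orP[h|/hasP[r ra /orP[h|h]]].
- by exists 0 => //; rewrite subr0.
- by exists r%:Z => //=; have := allP hM r ra.
- exists (- r%:Z); last by rewrite opprK.
  by rewrite abszN /=; have := allP hM r ra.
Qed.

Lemma Lift_R B rho u v d d' : (B.*2 + M < kof rho)%N -> (`|d| <= B)%N -> (`|d'| <= B)%N ->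
  Lift rho u d -> Lift rho v d' -> Rv u v = Rint a (d' - d).
Proof.
move=> hk hd hd' h1 h2.
have e1 := Lift_kof h1; have e2 := Lift_kof h2.
move: h1 h2; rewrite /Lift => /andP[/eqP t1 h1] /andP[/eqP t2 h2].
rewrite Rv_char -t1 -t2 eqxx /= e1 /Rz /Rint.
have key : forall t : int, (`|(d' - d - t)%R| < kof rho)%N ->
    ((kof rho)%:Z %| pos v - pos u - t)%Z = (d' - d == t).
  move=> t ht.
  have -> : pos v - pos u - t = (d' - d - t) + ((pos v - pos rho - d') - (pos u - pos rho - d)) by ring.
  by rewrite (dvdz_addX _ (rpredB h2 h1)) dvdz_small // subr_eq0.
congr orb.
  have := key 0 ltac:(rewrite subr0; lia); by rewrite !subr0.
apply: eq_in_has => r ra /=.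
have hr := allP hM r ra.
have -> : pos v - pos u + r%:Z = pos v - pos u - (- r%:Z) by ring.
by rewrite !key //; lia.
Qed.

End Vert.

Section Graph.
Variables (a : seq nat) (n M : nat).
Hypothesis hM : all (fun r => r <= M)%N a.
Local Notation B := (n * M)%N.
Variable E : {set 'I_n * 'I_n}.

Definition eE : rel 'I_n := fun i j => ((i, j) \in E) || ((j, i) \in E).
Lemma eE_sym : symmetric eE. Proof. by move=> i j; rewrite /eE orbC. Qed.
Lemma eE_csym : connect_sym eE. Proof. exact: sym_connect_sym eE_sym. Qed.
Definition rt (i : 'I_n) : 'I_n := fingraph.root eE i.
Lemma rt_rt i : rt (rt i) = rt i. Proof. exact: root_root eE_csym i. Qed.
Lemma rt_edge p : p \in E -> rt p.1 = rt p.2.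
Proof. by move=> pE; apply/(fingraph.rootP eE_csym)/connect1; rewrite /eE -surjective_pairing pE. Qed.

Local Notation W := 'I_(B.*2.+1).
Definition dz (w : W) : int := (nat_of_ord w)%:Z - B%:Z.
Lemma dz_bound (w : W) : (`|dz w| <= B)%N.
Proof. rewrite /dz; have := ltn_ord w; lia. Qed.
Lemma dz_inj : injective dz.
Proof. move=> w1 w2; rewrite /dz => h; apply: val_inj => /=; lia. Qed.
Lemma dz_surj (d : int) : (`|d| <= B)%N -> exists w : W, dz w = d.
Proof.
move=> h; have hb : (absz (d + B%:Z)%R < B.*2.+1)%N by lia.
by exists (Ordinal hb); rewrite /dz /=; lia.
Qed.

Definition Dset : {set {ffun 'I_n -> W}} :=
  [set w : {ffun 'I_n -> W} | [forall i, (rt i == i) ==> (dz (w i) == 0)] &&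
           [forall p in E, Rint a (dz (w p.2) - dz (w p.1))]].

Definition nroots : nat := #|[pred i | rt i == i]|.

Variable ks : seq nat.
Hypothesis hks : all (fun k => (B.*2 + M < k)%N) ks.
Local Notation V := (vert ks).

Lemma kof_big (u : V) : (B.*2 + M < kof u)%N.
Proof. apply: (allP hks); rewrite /kof; apply: mem_nth; exact: ltn_ord. Qed.

Definition validE (f : {ffun 'I_n -> V}) := [forall p in E, Rv a (f p.1) (f p.2)].

Lemma step_Lift f x y : validE f -> eE x y -> exists2 d : int, (`|d| <= M)%N & Lift (f x) (f y) d.
Proof.
move=> /forallP hv /orP[h|h].
  by have := hv (x, y); rewrite h /= => /(Rv_Lift hM).
have := hv (y, x); rewrite h /= => /(Rv_Lift hM) [d hd hl].
by exists (- d); rewrite ?abszN // Lift_sym.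
Qed.

Lemma path_Lift f x p : validE f -> path eE x p ->
  exists2 d : int, (`|d| <= size p * M)%N & Lift (f x) (f (last x p)) d.
Proof.
move=> hv; elim: p x => [|y p IH] x /=.
  by move=> _; exists 0 => //; exact: Lift0.
case/andP => hxy hp; have [d hd hl] := IH y hp.
have [d0 hd0 hl0] := step_Lift hv hxy.
exists (d0 + d); last exact: Lift_trans hl0 hl.
lia.
Qed.

Lemma connect_Lift f x y : validE f -> connect eE x y ->
  exists2 d : int, (`|d| <= B)%N & Lift (f x) (f y) d.
Proof.
move=> hv /connectP[p hp ->].
case: (shortenP hp) => p' hp' up' _.
have [d hd hl] := path_Lift hv hp'.
exists d => //.
have hs : (size (x :: p') <= n)%N.
  by rewrite -(card_uniqP up'); have := max_card (mem (x :: p')); rewrite card_ord.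
apply: leq_trans hd _; rewrite leq_mul2r; apply/orP; right; move: hs => /=; lia.
Qed.

Definition off (u v : V) : W := odflt ord0 [pick w : W | Lift u v (dz w)].

Lemma off_spec u v : (exists2 d : int, (`|d| <= B)%N & Lift u v d) -> Lift u v (dz (off u v)).
Proof.
case=> d hd hl; rewrite /off; case: pickP => [w hw //|none].
have [w hw] := dz_surj hd; have := none w; by rewrite hw hl.
Qed.

Lemma off_uniq u v w : Lift u v (dz w) -> off u v = w.
Proof.
move=> hl; have hs : exists2 d : int, (`|d| <= B)%N & Lift u v d by exists (dz w); rewrite ?dz_bound.
apply: dz_inj; apply: (Lift_uniq (dz_bound (off u v)) (dz_bound w) _ (off_spec hs) hl).
have := kof_big u; lia.
Qed.

Lemma valid_Lift f i : validE f -> Lift (f (rt i)) (f i) (dz (off (f (rt i)) (f i))).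
Proof.
move=> hv; apply: off_spec; apply: connect_Lift => //.
by rewrite eE_csym; apply: connect_root.
Qed.

Definition Phi (f : {ffun 'I_n -> V}) : {ffun 'I_n -> V} * {ffun 'I_n -> W} :=
  ([ffun i => f (rt i)], [ffun i => off (f (rt i)) (f i)]).
Definition Psi (gw : {ffun 'I_n -> V} * {ffun 'I_n -> W}) : {ffun 'I_n -> V} :=
  [ffun i => shift (gw.1 i) (dz (gw.2 i))].

Definition Gset : {set {ffun 'I_n -> V}} := [set g : {ffun 'I_n -> V} | [forall i, g i == g (rt i)]].

Lemma card_valid : #|[set f | validE f]| = (#|Gset| * #|Dset|)%N.
Proof.
rewrite -cardsX.
have inj : {in [set f | validE f] &, injective Phi}.
  move=> f1 f2; rewrite !inE => h1 h2 [e1 e2]; apply/ffunP => i.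
  have := congr1 (fun g : {ffun 'I_n -> V} => g i) e1; rewrite /= !ffunE => g1.
  have := congr1 (fun g : {ffun 'I_n -> W} => g i) e2; rewrite /= !ffunE => g2.
  rewrite (Lift_eq_shift (valid_Lift i h1)) (Lift_eq_shift (valid_Lift i h2)).
  by rewrite g2 g1.
rewrite -(card_in_imset inj); apply: eq_card => -[g w].
rewrite in_setX; apply/imsetP/andP.
- case=> f; rewrite inE => hv [-> ->]; split.
    by rewrite inE; apply/forallP => i; rewrite !ffunE rt_rt.
  rewrite inE; apply/andP; split.
    apply/forallP => i; apply/implyP => /eqP hr; rewrite ffunE.
    have := valid_Lift i hv; rewrite hr => hl.
    apply/eqP; apply: (Lift_uniq (dz_bound _) _ _ hl (Lift0 _)) => //; have := kof_big (f i).
    by move=> h; apply: leq_ltn_trans h; exact: leq_addr.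
  apply/forallP => p; apply/implyP => pE; rewrite !ffunE.
  have hl1 := valid_Lift p.1 hv; have hl2 := valid_Lift p.2 hv.
  rewrite (rt_edge pE) in hl1 *.
  rewrite -(Lift_R hM (kof_big _) (dz_bound _) (dz_bound _) hl1 hl2).
  by have := forallP hv p; rewrite pE.
- case; rewrite !inE => /forallP hg /andP[/forallP hr /forallP he].
  have g0 : forall i, shift (g i) 0 = g i by move=> i; rewrite -(Lift_eq_shift (Lift0 _)).
  have hgr : forall i, dz (w (rt i)) = 0 by move=> i; apply/eqP; have := hr (rt i); rewrite rt_rt eqxx.
  exists (Psi (g, w)).
    rewrite inE; apply/forallP => p; apply/implyP => pE; rewrite !ffunE /=.
    have e : g p.2 = g p.1 by rewrite (eqP (hg p.1)) (eqP (hg p.2)) (rt_edge pE).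
    rewrite e (Lift_R hM (kof_big _) (dz_bound _) (dz_bound _) (Lift_shift _ _) (Lift_shift _ _)).
    by have := he p; rewrite pE.
  rewrite /Phi; congr pair; apply/ffunP => i; rewrite !ffunE /=.
    by rewrite hgr g0 -(eqP (hg i)).
  rewrite hgr g0 -(eqP (hg i)); symmetry; apply: off_uniq; exact: Lift_shift.
Qed.

End Graph.

Lemma card_Gset (n : nat) (E : {set 'I_n * 'I_n}) (ks : seq nat) :
  #|Gset E ks| = (#|vert ks| ^ nroots E)%N.
Proof.
pose R := {i : 'I_n | rt E i == i}.
have rootR : forall i, rt E (rt E i) == rt E i by move=> i; rewrite rt_rt.
pose h (F : {ffun R -> vert ks}) : {ffun 'I_n -> vert ks} :=
  [ffun i => F (exist _ (rt E i) (rootR i))].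
have hs : forall r : R, exist _ (rt E (val r)) (rootR (val r)) = r :> R.
  by move=> r; apply: val_inj => /=; exact: (eqP (valP r)).
have inj : injective h.
  move=> F1 F2 e; apply/ffunP => r.
  have := congr1 (fun g : {ffun 'I_n -> vert ks} => g (val r)) e; rewrite /h !ffunE.
  by rewrite hs.
have -> : (#|vert ks| ^ nroots E)%N = #|{ffun R -> vert ks}| by rewrite card_ffun /nroots card_sig.
rewrite -(card_imset _ inj).
apply: eq_card => g; rewrite inE; apply/forallP/imsetP.
  move=> hg; exists [ffun r : R => g (val r)] => //; apply/ffunP => i.
  by rewrite /h !ffunE /= -(eqP (hg i)).
case=> F _ ->{g} i; rewrite /h !ffunE.
have -> : exist _ (rt E (rt E i)) (rootR (rt E i)) = exist _ (rt E i) (rootR i) :> R.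
  by apply: val_inj => /=; rewrite rt_rt.
by [].
Qed.

Lemma card_vert (ks : seq nat) : #|vert ks| = sumn ks.
Proof.
rewrite card_tagged.
rewrite (eq_map (fun i : 'I_(size ks) => card_ord (nth 0%N ks i))).
by rewrite (map_comp (nth 0%N ks) val) val_enum_ord -/(mkseq _ _) mkseq_nth.
Qed.

Lemma card_sum (T : finType) (P : pred T) : (#|[set x | P x]|%:R : rat) = \sum_x (P x)%:R.
Proof.
rewrite -sum1_card natr_sum big_mkcond /=; apply: eq_bigr => x _; rewrite inE.
by case: (P x).
Qed.

Lemma prod_bool_in (I : finType) (J : pred I) (b : I -> bool) :
  (\prod_(i in J) ((b i)%:R : rat)) = ([forall i in J, b i])%:R.
Proof.
case: (boolP [forall i in J, b i]) => [/forall_inP h | /forall_inPn [i iJ hi]].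
  by rewrite big1 // => i iJ; rewrite h.
by rewrite (bigD1 i) //= (negbTE hi) mul0r.
Qed.

Lemma prod_if (I : finType) (J : {set I}) (c : I -> bool) :
  \prod_i (if i \in J then - ((c i)%:R : rat) else 1) = (-1)^+#|J| * ([forall i in J, c i])%:R.
Proof. by rewrite -big_mkcond prodrN prod_bool_in. Qed.

Definition indepT (a ks : seq nat) (n : nat) (f : {ffun 'I_n -> vert ks}) : bool :=
  [forall p : 'I_n * 'I_n, (p.1 != p.2) ==> ~~ Rv a (f p.1) (f p.2)].

Lemma union_adj_irr a ks (u : vert ks) : union_adj a u u = false.
Proof. by rewrite /union_adj /Fadj !eqxx. Qed.

Lemma indepT_inj a ks n (f : {ffun 'I_n -> vert ks}) : indepT a f -> injective f.
Proof.
move=> /forallP h i j e; apply/eqP/negPn/negP => ne.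
by have := h (i, j); rewrite /= ne /Rv e eqxx.
Qed.

Lemma count_tuples a ks n :
  #|[set f : {ffun 'I_n -> vert ks} | indepT a f]| = (n`! * num_indep a ks n)%N.
Proof.
rewrite /num_indep -sum1_card.
set SS := [set S : {set vert ks} | independent a S & #|S| == n].
set A := [set f : {ffun 'I_n -> vert ks} | indepT a f].
rewrite (partition_big (fun f : {ffun 'I_n -> vert ks} => [set f i | i : 'I_n]) (mem SS)).
  rewrite mulnC -sum_nat_const; apply: eq_big => // S hSS; have : S \in SS := hSS; rewrite inE => /andP[hind /eqP hS].
  rewrite (eq_bigl (mem [set f in ffun_on (mem S) | injectiveb f])).
    by rewrite sum1_card card_inj_ffuns_on card_ord hS ffactnn.
  move=> f /=; rewrite !inE; apply/andP/andP.
    case=> hf /eqP <-; split; last by apply/injectiveP; exact: indepT_inj hf.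
    by apply/ffun_onP => i; rewrite imset_f.
  case=> /ffun_onP hon /injectiveP hinj.
  have eS : [set f i | i : 'I_n] = S.
    apply/eqP; rewrite eqEcard; apply/andP; split.
      by apply/subsetP => u /imsetP [i _ ->].
    by rewrite card_in_imset ?card_ord ?hS // => i j _ _; apply: hinj.
  split; last by rewrite eS.
  apply/forallP => p; apply/implyP => ne; rewrite /Rv negb_or; apply/andP; split.
    by apply: contra ne => /eqP /hinj ->.
  by have := forallP hind (f p.1); rewrite hon => /forallP/(_ (f p.2)); rewrite hon.
move=> f; rewrite inE => hf; change ([set f i | i : 'I_n] \in SS); rewrite inE; apply/andP; split.
  apply/forallP => u; apply/implyP => /imsetP [i _ ->].
  apply/forallP => v; apply/implyP => /imsetP [j _ ->].
  case: (i =P j) => [-> | ne]; first by rewrite union_adj_irr.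
  have := forallP hf (i, j); rewrite /= (introN eqP ne) /Rv negb_or /=.
  by case/andP.
rewrite card_in_imset ?card_ord // => i j _ _; apply: (@indepT_inj a ks n f); exact: hf.
Qed.

Lemma prod_bool (I : finType) (b : I -> bool) :
  (\prod_i ((b i)%:R : rat)) = ([forall i, b i])%:R.
Proof.
case: (boolP [forall i, b i]) => [/forallP h | /forallPn [i hi]].
  by rewrite big1 // => i _; rewrite h.
by rewrite (bigD1 i) //= (negbTE hi) mul0r.
Qed.

Lemma incl_excl a ks n :
  (#|[set f : {ffun 'I_n -> vert ks} | indepT a f]|%:R : rat) =
  \sum_(J : {set 'I_n * 'I_n})
     (if J \subset [set p : 'I_n * 'I_n | p.1 != p.2] then (-1)^+#|J| else 0) *
     (#|[set f : {ffun 'I_n -> vert ks} | validE a J f]|%:R).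
Proof.
rewrite card_sum.
transitivity (\sum_(f : {ffun 'I_n -> vert ks}) \prod_(p : 'I_n * 'I_n)
   (- (((p.1 != p.2) && Rv a (f p.1) (f p.2))%:R : rat) + 1)).
  apply: eq_bigr => f _; rewrite /indepT -prod_bool; apply: eq_bigr => p _.
  by case: (_ != _); case: (Rv _ _ _); rewrite /= ?oppr0 ?add0r ?addNr.
under eq_bigr => f _ do rewrite bigA_distr.
rewrite exchange_big; apply: eq_bigr => J _.
under eq_bigr => f _ do rewrite prod_if.
rewrite -big_distrr /= card_sum.
case: ifP => hJ.
  congr (_ * _); apply: eq_bigr => f _; congr (_%:R).
  rewrite /validE; congr (nat_of_bool _); apply/idP/idP => /forall_inP h; apply/forall_inP => p pJ.
    by case/andP: (h p pJ).
  rewrite (h p pJ) andbT.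
  by have := subsetP hJ p pJ; rewrite inE.
rewrite mul0r big1 ?mulr0 // => f _.
have [p pJ hp] : exists2 p, p \in J & p \notin [set p : 'I_n * 'I_n | p.1 != p.2].
  by apply/exists_inP; rewrite -negb_forall_in; apply/negP => h; move: hJ; rewrite (introT subsetP) //; move=> x xJ; have := forall_inP h x xJ.
case: forall_inP => // h; have := h p pJ; move: hp; rewrite inE negbK => /eqP -> .
by rewrite eqxx.
Qed.



Theorem theorem3p4 (a : seq nat) (n : nat) :
  all (fun x => 0 < x)%N a ->
  exists (P : {poly rat}) (N : nat),
    forall ks : seq nat,
      (0 < size ks)%N -> all (fun k => N <= k)%N ks ->
      (num_indep a ks n)%:R = P.[(sumn ks)%:R].
Proof.
move=> _.
have hM : all (fun r => r <= foldr maxn 0 a)%N a.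
  elim: a => //= r s IH; rewrite leq_maxl /=.
  by apply: sub_all IH => x hx; exact: leq_trans hx (leq_maxr _ _).
set Mx := foldr maxn 0%N a in hM.
exists (\sum_(J : {set 'I_n * 'I_n})
  (((if J \subset [set p : 'I_n * 'I_n | p.1 != p.2] then (-1)^+#|J| else 0) *
     (#|Dset a Mx J|)%:R / (n`!)%:R) *: 'X^(nroots J))).
exists ((n * Mx).*2 + Mx).+1.
move=> ks _ hks.
have hn : (n`!)%:R != 0 :> rat by rewrite pnatr_eq0 -lt0n fact_gt0.
apply: (mulfI hn).
rewrite -natrM -count_tuples incl_excl horner_sum mulr_sumr.
apply: eq_bigr => J _.
rewrite hornerZ hornerXn (card_valid hM J hks) card_Gset card_vert natrM natrX.
move: (if _ then _ else _) (_ ^+ nroots J) (#|Dset a Mx J|%:R) => c x d; by field.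
Qed.
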